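(* Let $n\ge2$ with prime factorization $n=p_1\cdots p_m$. Then the complete graph $K_n$ factors as $K_n\cong K_{p_1}\cdot\,\cdots\,\cdot K_{p_m}$ in the Zykov product, and this is the unique factorization of $K_n$ into Zykov-multiplicative primes, up to order and isomorphism of the factors.
   Context: For $G=(V,E)$, $H=(W,F)$, the Zykov product $G\cdot H$ has vertex set $V\times W$, with $(a,b)$ and $(c,d)$ adjacent iff $\{a,c\}\in E$ or $\{b,d\}\in F$; its unit is $K_1$. A finite simple graph $P\not\cong K_1$, nonempty, is a Zykov-multiplicative prime if $P\cong A\cdot B$ implies $A\cong K_1$ or $B\cong K_1$. *)

(* Defs.v *)
From mathcomp Require Import all_boot.
Set Implicit Arguments. Unset Strict Implicit. Unset Printing Implicit Defensive.

Record graph : Type := Graph {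
  vert : finType;
  adj : rel vert;
  adj_sym : symmetric adj;
  adj_irr : irreflexive adj
}.

Definition giso (G H : graph) : Prop :=
  exists f : vert G -> vert H,
    bijective f /\ forall x y, @adj H (f x) (f y) = @adj G x y.

Definition complete_adj (n : nat) : rel 'I_n := fun i j => i != j.
Lemma complete_sym (n : nat) : symmetric (@complete_adj n).
Proof. by move=> i j; rewrite /complete_adj eq_sym. Qed.
Lemma complete_irr (n : nat) : irreflexive (@complete_adj n).
Proof. by move=> i; rewrite /complete_adj eqxx. Qed.
Definition complete (n : nat) : graph :=
  @Graph 'I_n (@complete_adj n) (@complete_sym n) (@complete_irr n).

Definition K1 : graph := complete 1.

Section Zykov.
Variables G H : graph.
Definition zykov_adj : rel (vert G * vert H) :=
  fun u v => @adj G u.1 v.1 || @adj H u.2 v.2.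
Lemma zykov_sym : symmetric zykov_adj.
Proof. by move=> u v; rewrite /zykov_adj (@adj_sym G) (@adj_sym H). Qed.
Lemma zykov_irr : irreflexive zykov_adj.
Proof. by move=> u; rewrite /zykov_adj !adj_irr. Qed.
Definition zykov : graph :=
  @Graph (vert G * vert H)%type zykov_adj zykov_sym zykov_irr.
End Zykov.

Definition zykov_list (gs : seq graph) : graph := foldr zykov K1 gs.

Definition zprime (P : graph) : Prop :=
  ~ giso P K1 /\ 0 < #|vert P| /\
  forall A B : graph, giso P (zykov A B) -> giso A K1 \/ giso B K1.

(* Main.v *)
Require Import Defs.
From mathcomp Require Import all_boot.

Definition cplt (G : graph) := forall x y : vert G, @adj G x y = (x != y).

Lemma giso_card G H : giso G H -> #|vert G| = #|vert H|.
Proof. by case=> f [fb _]; exact: bij_eq_card fb. Qed.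

Lemma giso_sym G H : giso G H -> giso H G.
Proof.
case=> f [fb fa]; case: (fb) => g fg gf.
exists g; split; first by exists f.
by move=> x y; rewrite -fa !gf.
Qed.

Lemma giso_trans G H K : giso G H -> giso H K -> giso G K.
Proof.
case=> f [fb fa] [h [hb ha]]; exists (h \o f); split; first exact: bij_comp.
by move=> x y /=; rewrite ha fa.
Qed.

Lemma cplt_iso (G H : graph) : cplt G -> giso G H -> cplt H.
Proof.
move=> cG [f [fb fa]]; case: (fb) => g fg gf x y.
by rewrite -(gf x) -(gf y) fa cG (inj_eq (can_inj fg)).
Qed.

Lemma cplt_giso G H : cplt G -> cplt H -> #|vert G| = #|vert H| -> giso G H.
Proof.
move=> cG cH e.
pose f := fun x : vert G => (enum_val (cast_ord e (enum_rank x)) : vert H).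
exists f.
have fi : injective f.
  by rewrite /f => x y /enum_val_inj /cast_ord_inj /enum_rank_inj.
split; first by apply: (inj_card_bij fi); rewrite e.
by move=> x y; rewrite cG cH (inj_eq fi).
Qed.

Lemma cplt_complete n : cplt (complete n).
Proof. by []. Qed.

Lemma cplt_zykov G H : cplt G -> cplt H -> cplt (zykov G H).
Proof.
move=> cG cH [a b] [c d]; rewrite /= /zykov_adj /= cG cH.
by rewrite xpair_eqE negb_and.
Qed.

Lemma cplt_zykovl G H (y : vert H) : cplt (zykov G H) -> cplt G.
Proof.
move=> c a b; have := c (a, y) (b, y); rewrite /= /zykov_adj /= adj_irr orbF => ->.
by rewrite xpair_eqE eqxx andbT.
Qed.

Lemma cplt_zykovr G H (y : vert G) : cplt (zykov G H) -> cplt H.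
Proof.
move=> c a b; have := c (y, a) (y, b); rewrite /= /zykov_adj /= adj_irr /= => ->.
by rewrite xpair_eqE eqxx.
Qed.

Lemma card_zykov_list gs : #|vert (zykov_list gs)| = \prod_(g <- gs) #|vert g|.
Proof.
elim: gs => [|g gs IH]; first by rewrite big_nil /= card_ord.
by rewrite big_cons /= card_prod IH.
Qed.

Lemma cplt_zykov_list_map ps : cplt (zykov_list (map complete ps)).
Proof.
elim: ps => [|p ps IH] //=; exact: cplt_zykov.
Qed.

Lemma cplt_list_nth gs : 0 < #|vert (zykov_list gs)| -> cplt (zykov_list gs) ->
  forall i, i < size gs -> cplt (nth K1 gs i).
Proof.
elim: gs => [|g gs IH] //= hc c [|i] /=.
- move=> _; move: hc; rewrite card_prod muln_gt0 => /andP [_].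
  by case/card_gt0P => y _; exact: cplt_zykovl c.
- rewrite ltnS => hi; move: hc; rewrite card_prod muln_gt0 => /andP [hg hr].
  apply: IH hr _ i hi; case/card_gt0P: hg => y _; exact: cplt_zykovr c.
Qed.

Lemma zprime_cplt G : cplt G -> zprime G -> prime #|vert G|.
Proof.
move=> cG [nK1 [pos hp]]; apply/negPn/negP => /primePn [lt2|[d /andP [d1 dk] dv]].
  have e1 : #|vert G| = 1 by case: #|vert G| lt2 pos => [|[|]].
  by apply: nK1; apply: cplt_giso => //; rewrite e1 card_ord.
set k := #|vert G| in dk dv.
have b1 : 1 < k %/ d.
  by rewrite ltn_divRL // mul1n.
have := hp (complete d) (complete (k %/ d)).
case.
- apply: cplt_giso => //; first exact: cplt_zykov.
  by rewrite /= card_prod !card_ord mulnC divnK.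
- by move/giso_card; rewrite !card_ord => e; rewrite e in d1.
- by move/giso_card; rewrite !card_ord => e; rewrite e in b1.
Qed.

Lemma prod_primes_perm (s t : seq nat) : all prime s -> all prime t ->
  \prod_(p <- s) p = \prod_(p <- t) p -> perm_eq s t.
Proof.
have key : forall (s : seq nat) x, all prime s -> 
   count_mem x s = if prime x then logn x (\prod_(p <- s) p) else 0.
  move=> s0 x; elim: s0 => [|q s0 IH] /=; first by rewrite big_nil logn1; case: ifP.
  case/andP => pq ps; rewrite big_cons IH //.
  have pp : 0 < \prod_(p <- s0) p.
    elim: s0 ps {IH} => [|a s1 IH1] /=; rewrite ?big_nil ?big_cons // => /andP[pa ps1].
    by rewrite muln_gt0 prime_gt0 // IH1.
  case: ifP => px; last by rewrite addn0; case: eqP => // e; by rewrite e px in pq.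
  by rewrite (lognM _ (prime_gt0 pq) pp) (logn_prime _ pq) eq_sym.
move=> ps pt E; apply/allP => x _ /=; apply/eqP; by rewrite !key // E.
Qed.

Theorem mainTheorem10 (n : nat) (ps : seq nat) :
  2 <= n -> all prime ps -> \prod_(p <- ps) p = n ->
  giso (complete n) (zykov_list (map complete ps)) /\
  (forall gs : seq graph,
     (forall i, i < size gs -> zprime (nth K1 gs i)) ->
     giso (complete n) (zykov_list gs) ->
     exists f : 'I_(size gs) -> 'I_(size ps),
       bijective f /\
       forall i : 'I_(size gs), giso (nth K1 gs i) (complete (nth 0 ps (f i)))).
Proof.
move=> n2 pps hprod; split.
  apply: cplt_giso; [exact: cplt_complete | exact: cplt_zykov_list_map |].
  rewrite card_ord card_zykov_list big_map -hprod.
  by apply: eq_bigr => p _; rewrite card_ord.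
move=> gs hp hiso.
have hn : #|vert (zykov_list gs)| = n by rewrite -(giso_card _ _ hiso) card_ord.
have cL : cplt (zykov_list gs) := cplt_iso _ _ (@cplt_complete n) hiso.
have ci : forall i, i < size gs -> cplt (nth K1 gs i).
  by apply: cplt_list_nth => //; rewrite hn; exact: ltnW.
set ks := map (fun g => #|vert g|) gs.
have pks : all prime ks.
  rewrite /ks all_map; apply/(all_nthP K1) => i hi /=.
  exact: zprime_cplt (ci _ hi) (hp _ hi).
have prk : \prod_(k <- ks) k = n by rewrite big_map -card_zykov_list.
have pe : perm_eq ks ps by apply: prod_primes_perm => //; rewrite prk hprod.
case/(perm_iotaP 0): pe => Is pIs eks.
have szI : size Is = size gs by rewrite -(size_map (nth 0 ps)) -eks size_map.
have szp : size gs = size ps by rewrite -szI (perm_size pIs) size_iota.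
have fP : forall i : 'I_(size gs), nth 0 Is i < size ps.
  move=> i; have : nth 0 Is i \in iota 0 (size ps).
    by rewrite -(perm_mem pIs) mem_nth // szI.
  by rewrite mem_iota.
pose f := fun i : 'I_(size gs) => Ordinal (fP i).
have uI : uniq Is by rewrite (perm_uniq pIs) iota_uniq.
have fi : injective f.
  move=> i j /(congr1 val) /= /eqP; rewrite nth_uniq ?szI // => /eqP e.
  exact: val_inj.
exists f; split; first by apply: (inj_card_bij fi); rewrite !card_ord szp.
move=> i; apply: cplt_giso; [exact: ci | exact: cplt_complete |].
rewrite card_ord /=.
have := congr1 (fun s => nth 0 s i) eks.
by rewrite /ks (nth_map K1) // (nth_map 0) ?szI.
Qed.
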